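(* Let $D$ be a digraph with $n$ vertices and $a$ arcs, with outdegrees $d_1^+,\dots,d_n^+$, and let $\alpha\in[0,1)$. Then $$\|D_\alpha\|_*\le \sqrt{n\Big[(1-\alpha)^2a+\alpha^2\sum_{i=1}^n (d_i^+)^2\Big]},$$ with equality if and only if either (a) $D$ has no arcs, or (b) $\alpha=0$ and $D$ is a direct sum (vertex-disjoint union) of directed cycles.
   Context: Digraphs are simple: a finite vertex set and a set of arcs, which are ordered pairs of distinct vertices, with no parallel arcs (a pair of opposite arcs is allowed). A directed cycle of order $m\ge 2$ has vertices $w_1,\dots,w_m$ and arcs $(w_1,w_2),\dots,(w_{m-1},w_m),(w_m,w_1)$. For a digraph $D$ on vertices $v_1,\dots,v_n$, the adjacency matrix $A(D)=(a_{ij})$ has $a_{ij}=1$ if $(v_i,v_j)$ is an arc and $0$ otherwise; $d_i^+$ is the outdegree of $v_i$, and $\Delta^+(D)=\mathrm{diag}(d_1^+,\dots,d_n^+)$. For $\alpha\in[0,1)$, $A_\alpha(D)=\alpha\Delta^+(D)+(1-\alpha)A(D)$. The $\alpha$-trace norm $\|D_\alpha\|_*$ is the sum of the singular values of $A_\alpha(D)$, i.e. of the nonnegative square roots of the eigenvalues of $A_\alpha(D)A_\alpha(D)^T$, with multiplicity. *)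

(* Defs.v *)
From HB Require Import structures.
From mathcomp Require Import all_boot all_order all_algebra.
From mathcomp Require Import polyrcf.
Set Implicit Arguments. Unset Strict Implicit. Unset Printing Implicit Defensive.
Import Order.TTheory GRing.Theory Num.Theory.
Local Open Scope ring_scope.

(* A (simple) digraph on the vertex set 'I_n is an irreflexive relation
   D : rel 'I_n ; (i, j) is an arc iff D i j. *)
Definition digraph_irrefl n (D : rel 'I_n) : Prop := forall i, D i i = false.

Definition narcs n (D : rel 'I_n) : nat := #|[set ij : 'I_n * 'I_n | D ij.1 ij.2]|.

Definition outdeg n (D : rel 'I_n) (i : 'I_n) : nat := #|[set j | D i j]|.

Definition adjmx (R : nzRingType) n (D : rel 'I_n) : 'M[R]_n :=
  \matrix_(i, j) (D i j)%:R.
Definition outdegmx (R : nzRingType) n (D : rel 'I_n) : 'M[R]_n :=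
  \matrix_(i, j) ((i == j)%:R * (outdeg D i)%:R).

Definition Aalpha (R : nzRingType) n (D : rel 'I_n) (alpha : R) : 'M[R]_n :=
  alpha *: outdegmx R D + (1 - alpha) *: adjmx R D.

Definition sum_sqrt_eigs (R : rcfType) n (S : 'M[R]_n) : R :=
  let p := char_poly S in
  \sum_(x <- rootsR p) (mup x p)%:R * Num.sqrt x.

(* trace norm: sum of singular values of M, i.e. of the nonnegative square
   roots of the eigenvalues of M M^T with multiplicity *)
Definition trace_norm (R : rcfType) n (M : 'M[R]_n) : R :=
  sum_sqrt_eigs (M *m M^T).

Definition alpha_trace_norm (R : rcfType) n (D : rel 'I_n) (alpha : R) : R :=
  trace_norm (Aalpha D alpha).

(* The arcs of the directed cycle with vertices w_1,...,w_m listed by s: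
   (w_k, w_{k+1}) and (w_m, w_1). *)
Definition dicycle_arcs (T : eqType) (s : seq T) : rel T :=
  fun x y => (x \in s) && (y == next s x).

Definition direct_sum_of_dicycles n (D : rel 'I_n) : Prop :=
  exists ss : seq (seq 'I_n),
    [/\ all (fun s => uniq s && (2 <= size s)%N) ss,
        uniq (flatten ss),
        (forall v : 'I_n, v \in flatten ss) &
        (forall i j, D i j = has (fun s => dicycle_arcs s i j) ss)].

(* Main.v *)
Require Import Defs.
From HB Require Import structures.
From mathcomp Require Import all_boot all_order all_algebra.
From mathcomp Require Import polyrcf.
From mathcomp Require Import complex ring lra.
Set Implicit Arguments. Unset Strict Implicit. Unset Printing Implicit Defensive.
Import Order.TTheory GRing.Theory Num.Theory.


Lemma flat_uniq_in (T : eqType) (ss : seq (seq T)) s1 s2 x :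
  uniq (flatten ss) -> s1 \in ss -> s2 \in ss -> x \in s1 -> x \in s2 -> s1 = s2.
Proof.
elim: ss => [//|s ss IH] /=; rewrite cat_uniq => /and3P [_ hs u].
rewrite !inE => /orP [/eqP e1|i1] /orP [/eqP e2|i2] x1 x2.
- by rewrite e1 e2.
- exfalso; move/negP: hs; apply; apply/hasP; exists x; last by rewrite -e1.
  by apply/flattenP; exists s2.
- exfalso; move/negP: hs; apply; apply/hasP; exists x; last by rewrite -e2.
  by apply/flattenP; exists s1.
- exact: IH.
Qed.

Lemma dicycles_perm n (D : rel 'I_n) : direct_sum_of_dicycles D ->
  exists f : 'I_n -> 'I_n, injective f /\ forall i j, D i j = (j == f i).
Proof.
move=> [ss [hall hu hcov hD]].
pose s_of (i : 'I_n) := nth [::] ss (find (fun s => i \in s) ss).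
have hs : forall i, has (fun s => i \in s) ss.
  by move=> i; have /flattenP [s sin iin] := hcov i; apply/hasP; exists s.
have s_in : forall i, s_of i \in ss by move=> i; rewrite mem_nth // -has_find.
have i_in : forall i, i \in s_of i by move=> i; exact: (nth_find _ (hs i)).
have s_uniq : forall i, uniq (s_of i).
  by move=> i; have /andP [] := allP hall _ (s_in i).
exists (fun i => next (s_of i) i); split.
  move=> i k /= e.
  have e2 : s_of i = s_of k.
    apply: (flat_uniq_in hu (s_in i) (s_in k) (x := next (s_of i) i)).
      by rewrite mem_next.
    by rewrite e mem_next.
  by rewrite -(prev_next (s_uniq i) i) e e2 prev_next.
move=> i j; rewrite hD; apply/hasP/eqP.
  move=> [s sin /andP [iin /eqP ->]].
  by rewrite (flat_uniq_in hu sin (s_in i) iin (i_in i)).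
move=> ->; exists (s_of i) => //.
by rewrite /dicycle_arcs i_in eqxx.
Qed.

Lemma perm_dicycles n (D : rel 'I_n) (f : 'I_n -> 'I_n) :
  injective f -> (forall i, f i != i) -> (forall i j, D i j = (j == f i)) ->
  direct_sum_of_dicycles D.
Proof.
move=> injf fne hD.
have symf : connect_sym (frel f) by move=> x y; exact: fconnect_sym.
pose l := [seq x <- enum 'I_n | froots f x].
have nxt : forall x i, i \in orbit f x -> next (orbit f x) i = f i.
  move=> x i iin; have := next_cycle (cycle_orbit injf x) iin.
  by move=> /eqP.
have cov : forall v, v \in orbit f (froot f v).
  move=> v; rewrite -fconnect_orbit symf; exact: connect_root.
have rootl : forall v, froot f v \in l.
  by move=> v; rewrite mem_filter mem_enum andbT; exact: roots_root.
exists (map (orbit f) l); split.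
- apply/allP => s /mapP [x _ ->]; rewrite orbit_uniq /= size_orbit.
  have := order_gt0 f x; case e: (order f x) => [//|[|k]] _ //.
  have : f x \in orbit f x by apply: mem_orbit; exact: in_orbit.
  rewrite /orbit e /= inE => /eqP; move/eqP: (fne x); done.
- have : uniq l by rewrite filter_uniq // enum_uniq.
  have : all (froots f) l by apply/allP => x; rewrite mem_filter => /andP [].
  clear rootl; elim: l => [//|x l' IH] /= /andP [rx al] /andP [xn ul].
  rewrite cat_uniq orbit_uniq IH // andbT /=.
  apply/hasP => -[y /flattenP [s /mapP [z zin ->] yz] yx].
  have rz : froots f z by apply: (allP al).
  have cxz : fconnect f x z.
    apply: (connect_trans (y := y)); first by rewrite fconnect_orbit.
    by rewrite symf fconnect_orbit.
  move: cxz => /(fingraph.rootP symf); rewrite (eqP rx) (eqP rz) => exz.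
  by move: xn; rewrite exz zin.
- by move=> v; apply/flattenP; exists (orbit f (froot f v)) => //; apply: map_f.
- move=> i j; rewrite hD; apply/eqP/hasP.
    move=> ->; exists (orbit f (froot f i)); first exact: map_f.
    by rewrite /dicycle_arcs cov nxt ?cov // eqxx.
  move=> [s /mapP [x _ ->] /andP [iin /eqP ->]].
  by rewrite nxt.
Qed.


Local Open Scope ring_scope.

Section Spec.
Variable R : rcfType.
Local Notation toC := (real_complex R).

Lemma eig_real n (S : 'M[R]_n) (z : R[i]) : S^T = S ->
  eigenvalue (map_mx toC S) z -> z = toC (complex.Re z).
Proof.
move=> sym /eigenvalueP [v vS vn0].
set SC := map_mx toC S in vS *.
set vc := map_mx (@conjc R) v.
have SCc : map_mx (@conjc R) SC = SC.
  by apply/matrixP => i j; rewrite !mxE conjc_real.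
have SCt : SC^T = SC by rewrite /SC map_trmx sym.
have vcS : vc *m SC = (conjc z) *: vc.
  by rewrite -SCc /vc -map_mxM vS map_mxZ.
set W := v *m vc^T.
have h1 : v *m SC *m vc^T = z *: W by rewrite vS -scalemxAl.
have h2 : v *m SC *m vc^T = (conjc z) *: W.
  by rewrite -mulmxA -{1}SCt -trmx_mul vcS linearZ /= scalemxAr.
have W0 : W 0 0 != 0.
  rewrite /W !mxE; apply/negP => /eqP.
  have ge : forall k : 'I_n, true -> 0 <= v 0 k * vc^T k 0.
    by move=> k _; rewrite !mxE mulcJ_ge0.
  move/(psumr_eq0P ge) => H; apply/negP: vn0; rewrite negbK.
  apply/eqP/matrixP => i k; rewrite (ord1 i) mxE.
  have := H k isT; rewrite !mxE => /eqP; rewrite mulf_eq0 conjc_eq0 orbb.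
  by move/eqP.
have : (z - conjc z) * W 0 0 = 0.
  have := congr1 (fun M : 'M_1 => M 0 0) (etrans (esym h1) h2).
  by rewrite !mxE mulrBl => ->; rewrite subrr.
move/eqP; rewrite mulf_eq0 (negbTE W0) orbF subr_eq0.
clear -z; case: z => a b /=; rewrite eq_complex /= eqxx /= => /eqP hb.
have -> : b = 0 by lra.
by [].
Qed.

Lemma char_split n (S : 'M[R]_n) : S^T = S ->
  exists rs : seq R, char_poly S = \prod_(r <- rs) ('X - r%:P).
Proof.
move=> sym.
have [zs Hz] := closed_field_poly_normal (char_poly (map_mx toC S)).
rewrite (monicP (char_poly_monic _)) scale1r in Hz.
have Hreal : forall z, z \in zs -> z = toC (complex.Re z).
  move=> z zin; apply: (eig_real sym).
  by rewrite eigenvalue_root_char Hz root_prod_XsubC.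
exists (map (@complex.Re R) zs); apply: (@map_poly_inj _ _ toC).
rewrite map_char_poly Hz rmorph_prod /= big_map.
apply: eq_big_seq => z zin.
by rewrite rmorphB /= map_polyX map_polyC /= -Hreal.
Qed.

Lemma sum_rootsR (rs : seq R) (F : R -> R) :
  let p := \prod_(r <- rs) ('X - r%:P) in
  \sum_(x <- rootsR p) (mup x p)%:R * F x = \sum_(r <- rs) F r.
Proof.
move=> p.
have pn0 : p != 0 by rewrite monic_neq0 // monic_prod_XsubC.
have pe : perm_eq (rootsR p) (undup rs).
  apply: uniq_perm; first exact: uniq_roots.
    exact: undup_uniq.
  move=> x; rewrite mem_undup; have := roots_on_rootsR pn0 x.
  by rewrite in_itv /= => <-; rewrite /p root_prod_XsubC.
rewrite (perm_big _ pe) /=.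
rewrite -[RHS]big_undup_iterop_count.
apply: eq_bigr => x _.
rewrite /p mu_prod_XsubC Monoid.iteropE iter_addr_0 mulr_natl.
by [].
Qed.

Lemma coef_prodXsubC_pred (rs : seq R) : (0 < size rs)%N ->
  (\prod_(r <- rs) ('X - r%:P))`_(size rs).-1 = - \sum_(r <- rs) r.
Proof.
elim: rs => [//|a rs IH] _.
rewrite big_cons big_cons /= mulrBl coefB coefXM coefCM.
have lc : (\prod_(r <- rs) ('X - r%:P))`_(size rs) = 1.
  have m : \prod_(r <- rs) ('X - r%:P) \is monic by apply: monic_prod_XsubC.
  by have := monicP m; rewrite /lead_coef size_prod_XsubC.
case: rs IH lc => [|b rs] IH lc.
  by rewrite big_nil /= big_nil coefC eqxx; rewrite !big_nil /= in lc *; rewrite mulr1 addr0 sub0r.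
rewrite /= IH // lc mulr1 opprD addrC.
by [].
Qed.

Lemma rowsq (n : nat) (u : 'rV[R]_n) : (u *m u^T) 0 0 = \sum_k u 0 k ^+ 2.
Proof. by rewrite !mxE; apply: eq_bigr => k _; rewrite !mxE expr2. Qed.

Lemma rowsq_gt0 (n : nat) (u : 'rV[R]_n) : u != 0 -> 0 < (u *m u^T) 0 0.
Proof.
move=> un0; rewrite rowsq lt_def sumr_ge0 ?andbT; last by move=> k _; rewrite sqr_ge0.
apply/negP => /eqP /psumr_eq0P H; apply/negP: un0; rewrite negbK.
apply/eqP/matrixP => i k; rewrite (ord1 i) mxE.
have := H (fun j _ => sqr_ge0 _) k isT.
by move/eqP; rewrite sqrf_eq0 => /eqP.
Qed.

Lemma eig_pack n (M : 'M[R]_n) : exists rs : seq R,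
  [/\ char_poly (M *m M^T) = \prod_(r <- rs) ('X - r%:P), size rs = n,
      all (fun r => 0 <= r) rs,
      trace_norm M = \sum_(r <- rs) Num.sqrt r &
      \sum_(r <- rs) r = \tr (M *m M^T)].
Proof.
set S := M *m M^T.
have sym : S^T = S by rewrite /S trmx_mul trmxK.
have [rs Hrs] := char_split sym.
have sz : size rs = n.
  by have := size_char_poly S; rewrite Hrs size_prod_XsubC => -[].
exists rs; split => //.
- apply/allP => r rin.
  have : eigenvalue S r by rewrite eigenvalue_root_char Hrs root_prod_XsubC.
  move/eigenvalueP => [v vS vn0].
  have e1 : (v *m S *m v^T) 0 0 = r * (v *m v^T) 0 0.
    by rewrite vS -scalemxAl mxE.
  have e2 : (v *m S *m v^T) 0 0 = ((v *m M) *m (v *m M)^T) 0 0.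
    by rewrite /S trmx_mul !mulmxA.
  have h0 : 0 <= ((v *m M) *m (v *m M)^T) 0 0.
    by rewrite rowsq sumr_ge0 // => k _; rewrite sqr_ge0.
  have hp := rowsq_gt0 vn0.
  rewrite -e2 e1 in h0.
  by rewrite -(pmulr_lge0 _ hp).
- by rewrite /trace_norm /sum_sqrt_eigs -/S Hrs sum_rootsR.
- case: n M S sym Hrs sz => [|n] M S sym Hrs sz.
    by case: rs Hrs sz => // _ _; rewrite big_nil /mxtrace big_ord0.
  apply: oppr_inj; rewrite -coef_prodXsubC_pred ?sz // -Hrs.
  by rewrite char_poly_trace.
Qed.

Lemma cs_id (a : seq R) :
  (size a)%:R * ((size a)%:R * \sum_(x <- a) x ^+ 2 - (\sum_(x <- a) x) ^+ 2)
  = \sum_(x <- a) ((size a)%:R * x - \sum_(y <- a) y) ^+ 2.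
Proof.
set k := (size a)%:R; set s := \sum_(y <- a) y.
transitivity (\sum_(x <- a) (k ^+ 2 * x ^+ 2 - (2 * k * s) * x + s ^+ 2)); last first.
  by apply: eq_bigr => x _; ring.
rewrite big_split /= sumrB -!mulr_sumr big_const_seq count_predT iter_addr_0 -/s.
rewrite -mulr_natr -/k; ring.
Qed.

Lemma cs_le (a : seq R) : all (fun x => 0 <= x) a ->
  \sum_(x <- a) x <= Num.sqrt ((size a)%:R * \sum_(x <- a) x ^+ 2).
Proof.
move=> a0.
have s0 : 0 <= \sum_(x <- a) x by rewrite big_seq sumr_ge0 // => x /(allP a0).
case: a a0 s0 => [|b a'] a0 s0; first by rewrite !big_nil mulr0 sqrtr0.
set a := b :: a' in a0 s0 *.
have kp : 0 < (size a)%:R :> R by rewrite ltr0n.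
rewrite -(ger0_norm s0) -sqrtr_sqr ler_sqrt; last first.
  by rewrite mulr_ge0 ?ler0n // sumr_ge0 // => x _; rewrite sqr_ge0.
rewrite -subr_ge0 -(pmulr_rge0 _ kp) cs_id.
by rewrite sumr_ge0 // => x _; rewrite sqr_ge0.
Qed.

Lemma cs_eq (a : seq R) : all (fun x => 0 <= x) a ->
  \sum_(x <- a) x = Num.sqrt ((size a)%:R * \sum_(x <- a) x ^+ 2) ->
  forall x, x \in a -> (size a)%:R * x = \sum_(y <- a) y.
Proof.
move=> a0 he x xin.
have s0 : 0 <= \sum_(x <- a) x by rewrite big_seq sumr_ge0 // => y /(allP a0).
have q0 : 0 <= (size a)%:R * \sum_(x <- a) x ^+ 2.
  by rewrite mulr_ge0 ?ler0n // sumr_ge0 // => y _; rewrite sqr_ge0.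
have : (size a)%:R * ((size a)%:R * \sum_(x <- a) x ^+ 2 - (\sum_(x <- a) x) ^+ 2) = 0.
  by rewrite he sqr_sqrtr // subrr mulr0.
rewrite cs_id => /eqP; rewrite big_seq psumr_eq0; last by move=> y _; rewrite sqr_ge0.
move=> /allP /(_ x xin) /=; rewrite sqrf_eq0 subr_eq0 xin /=.
by move/eqP.
Qed.

Lemma trmx_expr m (T : 'M[R]_m) j : T^T = T -> (T ^+ j)^T = T ^+ j.
Proof.
move=> sT; elim: j => [|j IH]; first by rewrite !expr0 trmx1.
by rewrite exprS -mulmxE trmx_mul IH sT mulmxE -exprSr exprS.
Qed.

Lemma sym_nilp m (T : 'M[R]_m) k : T^T = T -> T ^+ k.+1 = 0 -> T = 0.
Proof.
move=> sT; elim: k => [|k IH]; first by rewrite expr1.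
move=> h; apply: IH.
set U := T ^+ k.+1.
have UU : U *m U^T = 0.
  by rewrite trmx_expr // mulmxE /U -exprD addSn -addnS exprD h mulr0.
apply/matrixP => i j; rewrite mxE.
have := congr1 (fun A : 'M_m => A i i) UU; rewrite mxE mxE.
move/eqP; rewrite psumr_eq0; last by move=> l _; rewrite mxE -expr2 sqr_ge0.
by move/allP/(_ j (mem_index_enum _)) => /=; rewrite mxE -expr2 sqrf_eq0 => /eqP.
Qed.

Lemma tn_le n (M : 'M[R]_n) :
  trace_norm M <= Num.sqrt (n%:R * \tr (M *m M^T)).
Proof.
have [rs [_ sz a0 -> <-]] := eig_pack M.
have a0' : all (fun x => 0 <= x) (map Num.sqrt rs).
  by apply/allP => x /mapP [r _ ->]; rewrite sqrtr_ge0.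
have := cs_le a0'; rewrite size_map sz !big_map.
suff -> : \sum_(r <- rs) Num.sqrt r ^+ 2 = \sum_(r <- rs) r by [].
by apply: eq_big_seq => r /(allP a0) /= r0; rewrite sqr_sqrtr.
Qed.

Lemma tn_eq n (M : 'M[R]_n) :
  trace_norm M = Num.sqrt (n%:R * \tr (M *m M^T)) <->
  exists c, M *m M^T = c%:M.
Proof.
have [rs [Hrs sz a0 -> <-]] := eig_pack M.
have sym : (M *m M^T)^T = M *m M^T by rewrite trmx_mul trmxK.
split.
- move=> he.
  have a0' : all (fun x => 0 <= x) (map Num.sqrt rs).
    by apply/allP => x /mapP [r _ ->]; rewrite sqrtr_ge0.
  have he' : \sum_(x <- map Num.sqrt rs) x =
     Num.sqrt ((size (map Num.sqrt rs))%:R * \sum_(x <- map Num.sqrt rs) x ^+ 2).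
    rewrite size_map sz !big_map he; congr (Num.sqrt (_ * _)).
    by apply: eq_big_seq => r /(allP a0) /= r0; rewrite sqr_sqrtr.
  have hx := cs_eq a0' he'.
  case: n M rs Hrs sz a0 sym he a0' he' hx => [|n] M rs Hrs sz a0 sym he a0' he' hx.
    by exists 0; apply/matrixP => -[].
  set t := (\sum_(x <- map Num.sqrt rs) x) / (n.+1)%:R.
  have allc : forall r, r \in rs -> r = t ^+ 2.
    move=> r rin; have := hx (Num.sqrt r) (map_f _ rin).
    rewrite size_map sz => e.
    rewrite /t -e mulrC mulKf ?pnatr_eq0 // sqr_sqrtr //.
    exact: (allP a0).
  exists (t ^+ 2).
  have cp : char_poly (M *m M^T) = ('X - (t ^+ 2)%:P) ^+ n.+1.
    rewrite Hrs (eq_big_seq (fun _ => 'X - (t ^+ 2)%:P)); last first.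
      by move=> r rin; rewrite (allc r rin).
    by rewrite big_const_seq count_predT sz -Monoid.iteropE.
  have := Cayley_Hamilton (M *m M^T); rewrite cp rmorphXn /= rmorphB /=.
  rewrite horner_mx_X horner_mx_C => hN.
  apply/eqP; rewrite -subr_eq0; apply/eqP.
  apply: (sym_nilp _ hN).
  by rewrite linearB /= sym tr_scalar_mx. 
- move=> [c hc].
  have allc : forall r, r \in rs -> r = c.
    move=> r rin.
    have : eigenvalue (M *m M^T) r by rewrite eigenvalue_root_char Hrs root_prod_XsubC.
    rewrite hc => /eigenvalueP [v]; rewrite mul_mx_scalar => /eqP.
    rewrite -subr_eq0 -scalerBl scaler_eq0 subr_eq0 => /orP [/eqP e| v0] vn0.
      by rewrite e.
    by rewrite v0 in vn0.
  have e1 : \sum_(r <- rs) Num.sqrt r = n%:R * Num.sqrt c.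
    rewrite (eq_big_seq (fun _ => Num.sqrt c)); last by move=> r /allc ->.
    by rewrite big_const_seq count_predT sz iter_addr_0 mulr_natl.
  have e2 : \sum_(r <- rs) r = n%:R * c.
    rewrite (eq_big_seq (fun _ => c)); last by move=> r /allc ->.
    by rewrite big_const_seq count_predT sz iter_addr_0 mulr_natl.
  rewrite e1 e2 mulrA -expr2 sqrtrM ?sqr_ge0 // sqrtr_sqr ger0_norm ?ler0n //.
Qed.
End Spec.

Section Mat.
Variable R : rcfType.
Variable n : nat.
Variable D : rel 'I_n.

Lemma Aentry (a : R) i j : Aalpha D a i j =
  a * ((i == j)%:R * (outdeg D i)%:R) + (1 - a) * (D i j)%:R.
Proof. by rewrite !mxE. Qed.

Lemma narcs_sum : (narcs D)%:R = \sum_i \sum_j (D i j)%:R :> R.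
Proof.
rewrite /narcs -sum1_card big_mkcond natr_sum pair_bigA /=.
by apply: eq_bigr => -[i j] _; rewrite inE /=; case: (D i j).
Qed.

Lemma outdeg_sum i : (outdeg D i)%:R = \sum_j (D i j)%:R :> R.
Proof.
rewrite /outdeg -sum1_card big_mkcond natr_sum /=.
by apply: eq_bigr => j _; rewrite inE /=; case: (D i j).
Qed.

Lemma Sentry (M : 'M[R]_n) i k : (M *m M^T) i k = \sum_j M i j * M k j.
Proof. by rewrite mxE; apply: eq_bigr => j _; rewrite mxE. Qed.

Lemma trace_formula (a : R) : digraph_irrefl D ->
  \tr (Aalpha D a *m (Aalpha D a)^T) =
  (1 - a) ^+ 2 * (narcs D)%:R + a ^+ 2 * \sum_(i < n) ((outdeg D i)%:R) ^+ 2.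
Proof.
move=> irr.
rewrite /mxtrace.
transitivity (\sum_i (a ^+ 2 * (outdeg D i)%:R ^+ 2
                     + (1 - a) ^+ 2 * \sum_j (D i j)%:R)); last first.
  by rewrite big_split /= -!mulr_sumr narcs_sum addrC.
apply: eq_bigr => i _; rewrite Sentry.
transitivity (\sum_j ((if j == i then a ^+ 2 * (outdeg D i)%:R ^+ 2 else 0)
                      + (1 - a) ^+ 2 * (D i j)%:R)).
  apply: eq_bigr => j _; rewrite Aentry.
  case: (eqVneq j i) => [->|jne]; first by rewrite irr /=; ring.
  case: (D i j) => /=; ring.
by rewrite big_split /= -big_mkcond big_pred1_eq -mulr_sumr.
Qed.
End Mat.

Section Mat2.
Variable R : rcfType.
Variable n : nat.
Variable D : rel 'I_n.

Lemma term_le_sum (F : 'I_n -> R) j0 : (forall j, 0 <= F j) -> F j0 <= \sum_j F j.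
Proof.
move=> h; rewrite (bigD1 j0) //= lerDl sumr_ge0 // => j _; exact: h.
Qed.

Lemma scalar_iff (a : R) : digraph_irrefl D -> 0 <= a -> a < 1 ->
  (exists c, Aalpha D a *m (Aalpha D a)^T = c%:M) <->
  (forall i j, D i j = false) \/ (a = 0 /\ direct_sum_of_dicycles D).
Proof.
move=> irr a0 a1.
have a1' : 0 < 1 - a by rewrite subr_gt0.
have Mge0 : forall i j, 0 <= Aalpha D a i j.
  move=> i j; rewrite Aentry addr_ge0 // !mulr_ge0 ?ler0n ?(ltW a1') //.
have od0 : forall i, (forall j, D i j = false) -> outdeg D i = 0%N.
  move=> i h; rewrite /outdeg; apply/eqP; rewrite cards_eq0; apply/eqP/setP => j.
  by rewrite inE h in_set0.
have Mij_ne : forall i j, D i j -> Aalpha D a i j = 1 - a.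
  move=> i j dij; have ne : (i == j) = false.
    by apply/eqP => e; move: dij; rewrite e irr.
  by rewrite Aentry ne dij /= mul0r mulr0 add0r mulr1.
have Mii : forall i, Aalpha D a i i = a * (outdeg D i)%:R.
  by move=> i; rewrite Aentry eqxx irr /= mul1r mulr0 addr0.
split.
- move=> [c hc].
  have Sii : forall i, \sum_j Aalpha D a i j ^+ 2 = c.
    move=> i; have := congr1 (fun A : 'M_n => A i i) hc.
    rewrite Sentry mxE eqxx mulr1n => <-.
    by apply: eq_bigr => j _; rewrite expr2.
  have Sik : forall i k, i != k -> \sum_j Aalpha D a i j * Aalpha D a k j = 0.
    move=> i k ne; have := congr1 (fun A : 'M_n => A i k) hc.
    by rewrite Sentry mxE (negbTE ne) mulr0n.
  case: (boolP [exists i, exists j, D i j]) => [/existsP [i0 /existsP [j0 d0]] | none]; last first.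
    left => i j; apply/negP => dij; move/negP: none; apply.
    by apply/existsP; exists i; apply/existsP; exists j.
  right.
  have cpos : 0 < c.
    rewrite -(Sii i0); apply: (lt_le_trans _ (term_le_sum j0 _)).
      by rewrite Mij_ne // exprn_gt0.
    by move=> j; rewrite sqr_ge0.
  have hasout : forall i, exists j, D i j.
    move=> i; case: (pickP (D i)) => [j dij|none']; first by exists j.
    have := Sii i; rewrite big1 => [e|j _].
      by move: cpos; rewrite -e ltxx.
    by rewrite Aentry od0 // none' /= !mulr0 addr0 expr2 mulr0.
  have odpos : forall i, 0 < (outdeg D i)%:R :> R.
    move=> i; have [k dik] := hasout i.
    rewrite outdeg_sum; apply: (lt_le_trans _ (term_le_sum k _)).
      by rewrite dik ltr01.
    by move=> j; rewrite ler0n.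
  have a00 : a = 0.
    case: (eqVneq a 0) => [//|an0]; exfalso.
    have ap : 0 < a by rewrite lt_def an0 a0.
    have ne : i0 != j0 by apply/eqP => e; move: d0; rewrite e irr.
    have := Sik _ _ ne.
    have : 0 < Aalpha D a i0 j0 * Aalpha D a j0 j0.
      by rewrite Mij_ne // Mii mulr_gt0 // mulr_gt0.
    move=> h1 h2.
    have h3 := term_le_sum j0 (F := fun j => Aalpha D a i0 j * Aalpha D a j0 j) (fun j => mulr_ge0 (Mge0 _ _) (Mge0 _ _)).
    rewrite /= h2 in h3.
    by move: (lt_le_trans h1 h3); rewrite ltxx.
  split => //.
  have Ment : forall i j, Aalpha D a i j = (D i j)%:R.
    by move=> i j; rewrite Aentry a00 mul0r add0r subr0 mul1r.
  pose f i := odflt i [pick j | D i j].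
  have Df : forall i, D i (f i).
    move=> i; rewrite /f; case: pickP => [j //|none'].
    by have [j dij] := hasout i; move: (none' j); rewrite dij.
  have common : forall i k j, D i j -> D k j -> i = k.
    move=> i k j dij dkj; case: (eqVneq i k) => [//|ne]; exfalso.
    have e := Sik _ _ ne.
    have h := term_le_sum j (F := fun j => Aalpha D a i j * Aalpha D a k j) (fun j => mulr_ge0 (Mge0 _ _) (Mge0 _ _)).
    move: h; rewrite /= e !Ment dij dkj mulr1.
    by rewrite ler10.
  have injf : injective f.
    by move=> i k e; apply: (common _ _ (f i) (Df i)); rewrite e Df.
  have hD : forall i j, D i j = (j == f i).
    move=> i j; apply/idP/eqP => [dij|->]; last exact: Df.
    have /codomP [k ek] := injF_onto injf j.
    by move: dij; rewrite ek => dik; rewrite (common _ _ _ dik (Df k)).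
  have fne : forall i, f i != i.
    by move=> i; apply/eqP => e; have := Df i; rewrite e irr.
  exact: perm_dicycles injf fne hD.
- case=> [h | [a00 hdc]].
    exists 0; apply/matrixP => i k; rewrite Sentry mxE mul0rn.
    by apply: big1 => j _; rewrite !Aentry !od0 // !h /= !mulr0 addr0 mul0r.
  exists 1; have [f [injf hD]] := dicycles_perm hdc.
  have Ment : forall i j, Aalpha D a i j = (j == f i)%:R.
    by move=> i j; rewrite Aentry a00 mul0r add0r subr0 mul1r hD.
  apply/matrixP => i k; rewrite Sentry mxE.
  rewrite (bigD1 (f i)) //= big1 => [|j jne]; last by rewrite !Ment (negbTE jne) mul0r.
  by rewrite !Ment eqxx mul1r addr0 (inj_eq injf) eq_sym.
Qed.
End Mat2.

Local Open Scope ring_scope.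

Theorem theorem3p1 (R : rcfType) (n : nat) (D : rel 'I_n) (alpha : R) :
  digraph_irrefl D -> 0 <= alpha -> alpha < 1 ->
  alpha_trace_norm D alpha <=
    Num.sqrt (n%:R * ((1 - alpha) ^+ 2 * (narcs D)%:R
                      + alpha ^+ 2 * \sum_(i < n) ((outdeg D i)%:R) ^+ 2))
  /\
  (alpha_trace_norm D alpha =
    Num.sqrt (n%:R * ((1 - alpha) ^+ 2 * (narcs D)%:R
                      + alpha ^+ 2 * \sum_(i < n) ((outdeg D i)%:R) ^+ 2))
   <-> (forall i j, D i j = false)
       \/ (alpha = 0 /\ direct_sum_of_dicycles D)).
Proof.
move=> irr a0 a1.
rewrite /alpha_trace_norm -(trace_formula alpha irr).
split; first exact: tn_le.
rewrite tn_eq; exact: scalar_iff.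
Qed.
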